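(* Let $\bar{\mathbb{P}}\in\mathcal{M}_1$ and let $\alpha$ be of the form $\alpha(Q)=\widetilde\alpha(Q)$ for $Q\in\mathcal{Q}^{\bar{\mathbb{P}}}$ and $\alpha(Q)=+\infty$ for $Q\in\mathcal{M}_1\setminus\mathcal{Q}^{\bar{\mathbb{P}}}$, where $\mathcal{Q}^{\bar{\mathbb{P}}}$ is a weak-$*$-closed subset of $\mathcal{P}^{\bar{\mathbb{P}}}$, $\widetilde\alpha(Q)<\infty$ for all $Q\in\mathcal{Q}^{\bar{\mathbb{P}}}$ and $\inf_{Q\in\mathcal{Q}^{\bar{\mathbb{P}}}}\widetilde\alpha(Q)>-\infty$. Then for every $P\in\mathcal{M}_1$ satisfying either $\bar{\mathbb{P}}\ll P$ or $\bar{\mathbb{P}}\perp P$ we have $C^P=\widehat C^P$ and $\rho^P=\widehat\rho^P=\widetilde\rho^P$, i.e. for all $X\in L^\infty(P)$ $$\sup_{Q\in\mathcal{Q}^{\bar{\mathbb{P}}}}\inf_{\{\widetilde X\in\mathcal{X}:P(\widetilde X=X)=1\}}\{\mathbb{E}_Q[-\widetilde X]-\widetilde\alpha(Q)\}=\inf_{\{\widetilde X\in\mathcal{X}:P(\widetilde X=X)=1\}}\sup_{Q\in\mathcal{Q}^{\bar{\mathbb{P}}}}\{\mathbb{E}_Q[-\widetilde X]-\widetilde\alpha(Q)\}=\rho^P(X).$$ In particular, if $\bar{\mathbb{P}}\ll P$ then the restriction of $\rho^P=\widehat\rho^P=\widetilde\rho^P$ to $\mathcal{X}$ equals $\rho$,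 and if $\bar{\mathbb{P}}\perp P$ then $\rho^P=\widehat\rho^P=\widetilde\rho^P\equiv-\infty$. Moreover, for all $P\in\mathcal{M}_1$, $$\widehat\rho^P|_{\mathcal{X}}\le\rho^P|_{\mathcal{X}}\le\rho=\rho^{\bar{\mathbb{P}}}|_{\mathcal{X}}=\widehat\rho^{\bar{\mathbb{P}}}|_{\mathcal{X}},$$ and $\widehat\rho^P\le\rho^P\le\rho^{\bar{\mathbb{P}}}=\widehat\rho^{\bar{\mathbb{P}}}$ on $L^\infty(P)\cap L^\infty(\bar{\mathbb{P}})$.
   Context: $(\Omega,\mathcal{F})$ is a measurable space, $\mathcal{M}_1$ the set of probability measures on it endowed with the topology of weak (weak-$*$) convergence, $\mathcal{X}$ the space of pointwise bounded $\mathcal{F}$-measurable real functions, $L^\infty(P)=L^\infty(\Omega,\mathcal{F},P)$, $\mathcal{P}^P=\{Q\in\mathcal{M}_1:Q\ll P\}$. With $\alpha$ as in the claim, $\rho(X):=\sup_{Q\in\mathcal{M}_1}\{\mathbb{E}_Q[-X]-\alpha(Q)\}$ for $X\in\mathcal{X}$ (assumed real-valued). For $P\in\mathcal{M}_1$ and $X\in L^\infty(P)$: $\rho^P(X)=\inf_{\{\widetilde X\in\mathcal{X}:P(\widetilde X=X)=1\}}\rho(\widetilde X)$; $\widehat\rho^P(X)=\sup_{Q\in\mathcal{P}^P}\{\mathbb{E}_Q[-X]-\alpha(Q)\}$; $\widetilde\rho^P(X)=\sup_{Q\in\mathcal{M}_1}\inf_{\{\widetilde X\in\mathcal{X}:P(\widetilde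 X=X)=1\}}\{\mathbb{E}_Q[-\widetilde X]-\alpha(Q)\}$; $C^P=\{X\in L^\infty(P):\rho^P(X)\le0\}$, $\widehat C^P=\{X\in L^\infty(P):\widehat\rho^P(X)\le0\}$. *)

(* Defs.v *)
From HB Require Import structures.
From mathcomp Require Import all_boot all_order all_algebra.
From mathcomp Require Import all_classical all_reals all_analysis.
Set Implicit Arguments. Unset Strict Implicit. Unset Printing Implicit Defensive.
Import Order.TTheory GRing.Theory Num.Theory.
Local Open Scope classical_set_scope.
Local Open Scope ring_scope.

Section RiskDefs.
Context {d : measure_display} {T : measurableType d} {R : realType}.

(* M_1 is the type [probability T R]. *)

Definition bdd_meas (X : T -> R) : Prop :=
  measurable_fun setT X /\ exists M : R, forall w, `|X w| <= M.

(* representatives of elements of L^infty(P): measurable, P-essentially bounded *)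
Definition Linf (P : probability T R) (X : T -> R) : Prop :=
  measurable_fun setT X /\ exists M : R, {ae P, forall w, `|X w| <= M}.

Definition singular (P1 P2 : probability T R) : Prop :=
  exists A, measurable A /\ P1 A = 0%E /\ P2 (~` A) = 0%E.

Definition expect (Q : probability T R) (X : T -> R) : \bar R :=
  (\int[Q]_w (X w)%:E)%E.

(* weak(-star) closedness in M_1: closed for the coarsest topology making
   Q |-> E_Q[X] continuous for every X in the space of bounded measurable
   functions; i.e. every point outside C has a basic neighbourhood
   { Q' : |E_Q'[X_i] - E_Q[X_i]| < e, i < n } disjoint from C. *)
Definition weak_closed (C : set (probability T R)) : Prop :=
  forall Q, ~ C Q ->
    exists (n : nat) (Xs : nat -> T -> R) (e : R), 0 < e /\
      (forall i, (i < n)%N -> bdd_meas (Xs i)) /\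
      (forall Q' : probability T R,
         (forall i, (i < n)%N ->
            (`| expect Q' (Xs i) - expect Q (Xs i) | < e%:E)%E) ->
         ~ C Q').

Variable alpha : probability T R -> \bar R.

Definition rho (X : T -> R) : \bar R :=
  ereal_sup (range (fun Q => (expect Q (fun w => (- X w)%R) - alpha Q)%E)).

Definition reps (P : probability T R) (X : T -> R) : set (T -> R) :=
  [set Xt | bdd_meas Xt /\ P [set w | Xt w = X w] = 1%E].

Definition rhoP (P : probability T R) (X : T -> R) : \bar R :=
  ereal_inf [set rho Xt | Xt in reps P X].

Definition rhohat (P : probability T R) (X : T -> R) : \bar R :=
  ereal_sup [set (expect Q (fun w => (- X w)%R) - alpha Q)%E
            | Q in [set Q : probability T R | Q `<< P]].

Definition rhotilde (P : probability T R) (X : T -> R) : \bar R :=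
  ereal_sup (range (fun Q : probability T R =>
    ereal_inf [set (expect Q (fun w => (- Xt w)%R) - alpha Q)%E | Xt in reps P X])).

(* acceptance sets C^P and hat C^P (as sets of representatives) *)
Definition accP (P : probability T R) : set (T -> R) :=
  [set X | Linf P X /\ (rhoP P X <= 0)%E].
Definition acchat (P : probability T R) : set (T -> R) :=
  [set X | Linf P X /\ (rhohat P X <= 0)%E].

End RiskDefs.

(* Main.v *)
Require Import Defs.
From HB Require Import structures.
From mathcomp Require Import all_boot all_order all_algebra.
From mathcomp Require Import all_classical all_reals all_analysis.
Import Order.TTheory GRing.Theory Num.Theory.
Import measurable_realfun.
Set Implicit Arguments.
Unset Strict Implicit.
Local Open Scope classical_set_scope.
Local Open Scope ring_scope.

Section Helpers.
Context {d : measure_display} {T : measurableType d} {R : realType}.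
Implicit Types P Q : probability T R.

Lemma dom_null P Q A : Q `<< P -> measurable A -> P A = 0%E -> Q A = 0%E.
Proof.
move=> QP mA PA0; apply: (QP A) => // B mB BA.
apply/eqP; rewrite eq_le measure_ge0 andbT -PA0.
by apply: le_measure; rewrite ?inE.
Qed.

Lemma dom_trans (P1 P2 P3 : probability T R) :
  P1 `<< P2 -> P2 `<< P3 -> P1 `<< P3.
Proof. by move=> h1 h2 A /h2 /h1. Qed.

Lemma dom_refl P : P `<< P.
Proof. by []. Qed.

Lemma dom_neg P Q N : Q `<< P -> P.-negligible N -> Q.-negligible N.
Proof.
move=> QP [A [mA PA NA]]; exists A; split => //; exact: dom_null QP mA PA.
Qed.

Lemma meas_eqset {f g : T -> R} : measurable_fun setT f -> measurable_fun setT g ->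
  measurable [set w | f w = g w].
Proof.
move=> mf mg.
have := measurable_funB mf mg measurableT (measurable_set1 0).
rewrite setTI.
suff -> : [set w | f w = g w] = (f \- g) @^-1` [set 0] by [].
apply/seteqP; split => w /=.
  by move=> ->; rewrite subrr.
by move/eqP; rewrite subr_eq0 => /eqP.
Qed.

Lemma repP P X Xt : measurable_fun setT X -> bdd_meas Xt ->
  (reps P X Xt <-> P.-negligible (~` [set w | Xt w = X w])).
Proof.
move=> mX [mXt bXt]; have mS := meas_eqset mXt mX.
split.
  move=> [_ PS]; exists (~` [set w | Xt w = X w]); split => //.
    exact: measurableC.
  by rewrite probability_setC // PS subee.
move=> [N [mN PN sN]]; split => //.
have P0 : P (~` [set w | Xt w = X w]) = 0%E.
  apply/eqP; rewrite eq_le measure_ge0 andbT -PN.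
  by apply: le_measure; rewrite ?inE //; apply: measurableC.
rewrite -[X in P X]setCK probability_setC ?P0 ?sube0 //; exact: measurableC.
Qed.

Definition trunc (X : T -> R) (M : R) : T -> R :=
  fun w => X w * \1_[set w | `|X w| <= M] w.

Lemma meas_le {X : T -> R} M : measurable_fun setT X ->
  measurable [set w | `|X w| <= M].
Proof.
move=> mX; have := mX measurableT _ (measurable_itv `[- M, M]).
rewrite setTI.
suff -> : [set w | `|X w| <= M] = X @^-1` `[- M, M] by [].
by apply/seteqP; split => w /=; rewrite in_itv /= ler_norml.
Qed.

Lemma trunc_bdd X M : measurable_fun setT X -> bdd_meas (trunc X M).
Proof.
move=> mX; split.
  apply: measurable_funM => //; exact: measurable_indic (meas_le M mX).
exists `|M| => w; rewrite /trunc indicE.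
case: (boolP (w \in _)) => [|_]; last by rewrite mulr0 normr0.
rewrite inE /= mulr1 => h; apply: le_trans h _; exact: ler_norm.
Qed.

Lemma trunc_rep P (X : T -> R) (M : R) : measurable_fun setT X ->
  P.-negligible (~` [set w | `|X w| <= M]) -> reps P X (trunc X M).
Proof.
move=> mX [N [mN PN sN]]; apply/repP => //; first exact: trunc_bdd.
exists N; split => // w /= hw; apply: sN => /= hle; apply: hw.
by rewrite /trunc indicE (mem_set (hle : [set w | `|X w| <= M] w)) mulr1.
Qed.

Lemma Linf_rep P (X : T -> R) : Linf P X -> exists Y, reps P X Y.
Proof. by move=> [mX [M hM]]; exists (trunc X M); exact: trunc_rep. Qed.

Lemma expect_ae Q (f g : T -> R) : measurable_fun setT f -> measurable_fun setT g ->
  Q.-negligible (~` [set w | f w = g w]) ->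
  expect Q (fun w => - f w) = expect Q (fun w => - g w).
Proof.
move=> mf mg [N [mN QN sN]]; rewrite /expect.
apply: ae_eq_integral => //.
- by apply/measurable_EFinP; exact: measurable_funN.
- by apply/measurable_EFinP; exact: measurable_funN.
exists N; split => // w /= hw; apply: sN => /= e; apply: hw => _.
by rewrite e.
Qed.

Lemma sup_restrict (U : Type) (A B : set U) (h h' : U -> \bar R) :
  B `<=` A -> (forall x, A x -> ~ B x -> h x = -oo%E) ->
  (forall x, B x -> h x = h' x) ->
  ereal_sup (h @` A) = ereal_sup (h' @` B).
Proof.
move=> BA hoo heq; apply/eqP; rewrite eq_le; apply/andP; split.
  apply: ge_ereal_sup => _ [x Ax <-].
  have [Bx|nBx] := pselect (B x).
    by rewrite heq //; apply: ereal_sup_ubound; exists x.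
  by rewrite hoo // leNye.
apply: ge_ereal_sup => _ [x Bx <-].
by rewrite -heq //; apply: ereal_sup_ubound; exists x => //; exact: BA.
Qed.

Lemma inf_const (U : Type) (A : set U) (f : U -> \bar R) c :
  (exists x, A x) -> (forall x, A x -> f x = c) -> ereal_inf (f @` A) = c.
Proof.
move=> [x0 Ax0] hc; suff -> : f @` A = [set c] by rewrite ereal_inf1.
apply/seteqP; split => y /=.
  by move=> [x Ax <-]; rewrite hc.
by move=> ->; exists x0 => //; rewrite hc.
Qed.

Lemma le_ninfty (x : \bar R) : (forall y : R, (x <= y%:E)%E) -> x = -oo%E.
Proof.
case: x => [x0| |] // H.
  move: (H (x0 - 1)); rewrite lee_fin => h; have : x0 <= x0 - 1 by []. rewrite -subr_ge0 addrAC subrr add0r oppr_ge0 ler10 //=.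
by have := H 0.
Qed.

End Helpers.
Section Main.
Context {d : measure_display} {T : measurableType d} {R : realType}.
Implicit Types P Q : probability T R.
Variables (Pbar : probability T R) (Qset : set (probability T R))
  (alpha_t alpha : probability T R -> \bar R).
Hypothesis Hdom : forall Q, Qset Q -> Q `<< Pbar.
Hypothesis Hfin : forall Q, Qset Q -> (alpha_t Q < +oo)%E.
Hypothesis Hinf : (-oo < ereal_inf (alpha_t @` Qset))%E.
Hypothesis Heq : forall Q, Qset Q -> alpha Q = alpha_t Q.
Hypothesis Hoo : forall Q, ~ Qset Q -> alpha Q = +oo%E.

Definition SS (Y : T -> R) : \bar R :=
  ereal_sup [set (expect Q (fun w => (- Y w)%R) - alpha_t Q)%E | Q in Qset].

Lemma term_oo Q (e : \bar R) : ~ Qset Q -> (e - alpha Q)%E = -oo%E.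
Proof. by move=> nQ; rewrite Hoo //= addeNy. Qed.

Lemma rhoS Y : rho alpha Y = SS Y.
Proof.
rewrite /rho /SS; apply: sup_restrict => //.
  by move=> Q _; exact: term_oo.
by move=> Q /Heq ->.
Qed.

Lemma alpha_t_fin Q : Qset Q -> alpha_t Q \is a fin_num.
Proof.
move=> QQ; rewrite fin_numE; apply/andP; split.
  rewrite -ltNye; apply: lt_le_trans Hinf _; apply: ereal_inf_lbound; by exists Q.
by rewrite lt_eqF // Hfin.
Qed.

Section Abs.
Variable P : probability T R.
Hypothesis HP : Pbar `<< P.

Lemma QP Q : Qset Q -> Q `<< P.
Proof. by move=> /Hdom h; exact: dom_trans h HP. Qed.

Lemma SS_rep X Y : measurable_fun setT X -> reps P X Y -> SS Y = SS X.
Proof.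
move=> mX rY; have [mY _] := rY.1.
have nY := (repP P mX rY.1).1 rY.
rewrite /SS; congr ereal_sup; apply: eq_imagel => Q QQ.
by rewrite (expect_ae mY mX (dom_neg (QP QQ) nY)).
Qed.

Lemma abs_all X : Linf P X ->
  [/\ rhoP alpha P X = SS X, rhohat alpha P X = SS X,
      rhotilde alpha P X = SS X,
      ereal_sup [set ereal_inf [set (expect Q (fun w => (- Xt w)%R) - alpha_t Q)%E
                                  | Xt in reps P X] | Q in Qset] = SS X &
      ereal_inf [set SS Xt | Xt in reps P X] = SS X].
Proof.
move=> LX; have mX := LX.1; have ne := Linf_rep LX.
have eqQ Q Xt : Qset Q -> reps P X Xt ->
    expect Q (fun w => (- Xt w)%R) = expect Q (fun w => (- X w)%R).
  move=> QQ rY; have [mY _] := rY.1.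
  have nY := (repP P mX rY.1).1 rY.
  exact: (expect_ae mY mX (dom_neg (QP QQ) nY)).
split.
- rewrite /rhoP; apply: inf_const => // Y rY; rewrite rhoS; exact: SS_rep.
- rewrite /rhohat /SS; apply: sup_restrict.
  + exact: QP.
  + by move=> Q _ nQ; exact: term_oo.
  + by move=> Q /Heq ->.
- rewrite /rhotilde /SS; apply: sup_restrict => //.
  + move=> Q _ nQ; apply: inf_const => // Y _; exact: term_oo.
  + by move=> Q QQ; apply: inf_const => // Y rY; rewrite Heq // eqQ.
- rewrite /SS; congr ereal_sup; apply: eq_imagel => Q QQ.
  by apply: inf_const => // Y rY; rewrite eqQ.
- by apply: inf_const => // Y rY; exact: SS_rep.
Qed.

End Abs.
End Main.

Section Main2.
Context {d : measure_display} {T : measurableType d} {R : realType}.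
Implicit Types P Q : probability T R.
Variables (Pbar : probability T R) (Qset : set (probability T R))
  (alpha_t alpha : probability T R -> \bar R).
Hypothesis Hdom : forall Q, Qset Q -> Q `<< Pbar.
Hypothesis Hfin : forall Q, Qset Q -> (alpha_t Q < +oo)%E.
Hypothesis Hinf : (-oo < ereal_inf (alpha_t @` Qset))%E.
Hypothesis Heq : forall Q, Qset Q -> alpha Q = alpha_t Q.
Hypothesis Hoo : forall Q, ~ Qset Q -> alpha Q = +oo%E.

Lemma hat_le P (X : T -> R) : measurable_fun setT X ->
  (rhohat alpha P X <= rhoP alpha P X)%E.
Proof.
move=> mX; apply: le_ereal_inf_tmp => _ [Y rY <-].
apply: ge_ereal_sup => _ [Q QP <-].
have [mY _] := rY.1.
have nY := (repP P mX rY.1).1 rY.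
rewrite -(expect_ae mY mX (dom_neg QP nY)).
by apply: ereal_sup_ubound; exists Q.
Qed.

Lemma le_rep P (X Y : T -> R) : reps P X Y -> (rhoP alpha P X <= rho alpha Y)%E.
Proof. by move=> rY; apply: ereal_inf_lbound; exists Y. Qed.

Section Sing.
Variable P : probability T R.
Variable A : set T.
Hypotheses (mA : measurable A) (PbA : Pbar A = 0%E) (PcA : P (~` A) = 0%E).

Lemma QA Q : Qset Q -> Q A = 0%E.
Proof. by move=> QQ; exact: dom_null (Hdom QQ) mA PbA. Qed.

Lemma notdom Q : Qset Q -> ~ Q `<< P.
Proof.
move=> QQ QP; have := dom_null QP (measurableC mA) PcA.
by rewrite probability_setC // QA // sube0 => /eqP; rewrite eqe oner_eq0.
Qed.

Definition Yr (X0 : T -> R) (r : R) : T -> R :=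
  fun w => X0 w * \1_A w + r * \1_(~` A) w.

Lemma Yr_rep (X X0 : T -> R) r : measurable_fun setT X -> reps P X X0 ->
  reps P X (Yr X0 r).
Proof.
move=> mX rX0; have [mX0 [K hK]] := rX0.1.
have nX0 := (repP P mX rX0.1).1 rX0.
have bY : bdd_meas (Yr X0 r).
  split.
    exact: (measurable_funD (measurable_funM mX0 (measurable_indic mA))
       (measurable_funM (measurable_cst r) (measurable_indic (measurableC mA)))).
  exists (K + `|r|) => w; rewrite /Yr !indicE in_setC.
  have K0 : 0 <= K by apply: le_trans (hK w).
  case: (boolP (w \in A)) => _ /=; rewrite ?mulr1 ?mulr0 ?addr0 ?add0r.
    by apply: le_trans (hK w) _; rewrite lerDl.
  by rewrite lerDr.
apply/repP => //.
have nA : P.-negligible (~` A).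
  by exists (~` A); split => //; exact: measurableC.
apply: negligibleS (negligibleU nX0 nA) => w /= hw.
apply/not_andP => -[h1 h2]; apply: hw.
by rewrite /Yr !indicE in_setC (mem_set h2) /= mulr1 mulr0 addr0.
Qed.

Lemma Yr_exp Q (X0 : T -> R) r : Qset Q -> measurable_fun setT X0 ->
  expect Q (fun w => (- Yr X0 r w)%R) = (- r)%:E.
Proof.
move=> QQ mX0.
have mY : measurable_fun setT (Yr X0 r).
  exact: (measurable_funD (measurable_funM mX0 (measurable_indic mA))
       (measurable_funM (measurable_cst r) (measurable_indic (measurableC mA)))).
rewrite (expect_ae (g := cst r) mY (measurable_cst _)); last first.
  exists A; split => //; first exact: QA.
  move=> w /= hw; apply: contrapT => nAw; apply: hw.
  by rewrite /Yr !indicE in_setC (memNset nAw) /= mulr0 mulr1 add0r.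
rewrite /expect.
have -> : (fun w => (- cst r w)%:E) = cst (- r)%:E by [].
rewrite integral_cst // -[RHS]mule1; congr (_ * _)%E.
exact: probability_setT.
Qed.

Lemma SS_small (X0 : T -> R) : measurable_fun setT X0 ->
  forall y : R, exists r, (SS Qset alpha_t (Yr X0 r) <= y%:E)%E.
Proof.
move=> mX0 y.
have key r : (SS Qset alpha_t (Yr X0 r) <= (- r)%:E - ereal_inf (alpha_t @` Qset))%E.
  apply: ge_ereal_sup => _ [Q QQ <-]; rewrite Yr_exp //.
  by apply: leeB => //; apply: ereal_inf_lbound; exists Q.
move: key Hinf; case: (ereal_inf _) => [c0| |] // key _.
  exists (- (y + c0)); apply: le_trans (key _) _.
  by rewrite opprK -EFinB addrK.
by exists 0; apply: le_trans (key _) _; rewrite /= addeNy leNye.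
Qed.

Lemma sing_rhoP X : Linf P X -> rhoP alpha P X = -oo%E.
Proof.
move=> LX; have [X0 rX0] := Linf_rep LX; have [mX0 _] := rX0.1.
apply: le_ninfty => y; have [r hr] := SS_small mX0 y.
apply: le_trans (le_rep (Yr_rep r LX.1 rX0)) _.
by rewrite (rhoS Heq Hoo).
Qed.

Lemma sing_mid X : Linf P X ->
  ereal_inf [set SS Qset alpha_t Xt | Xt in reps P X] = -oo%E.
Proof.
move=> LX; have [X0 rX0] := Linf_rep LX; have [mX0 _] := rX0.1.
apply: le_ninfty => y; have [r hr] := SS_small mX0 y.
apply: le_trans _ hr; apply: ereal_inf_lbound; exists (Yr X0 r) => //.
exact: Yr_rep r LX.1 rX0.
Qed.

Lemma sing_inner Q X : Qset Q -> Linf P X ->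
  ereal_inf [set (expect Q (fun w => (- Xt w)%R) - alpha_t Q)%E
            | Xt in reps P X] = -oo%E.
Proof.
move=> QQ LX; have [X0 rX0] := Linf_rep LX; have [mX0 _] := rX0.1.
have := alpha_t_fin Hfin Hinf QQ.
case Ea: (alpha_t Q) => [a| |] // _.
apply: le_ninfty => y.
apply: ereal_inf_lbound; exists (Yr X0 (- (y + a))); first exact: Yr_rep _ LX.1 rX0.
by rewrite Yr_exp // opprK -EFinB addrK.
Qed.

Lemma sing_inner_alpha Q X : Linf P X ->
  ereal_inf [set (expect Q (fun w => (- Xt w)%R) - alpha Q)%E
            | Xt in reps P X] = -oo%E.
Proof.
move=> LX; have [QQ|nQ] := pselect (Qset Q).
  rewrite -(sing_inner QQ LX); congr ereal_inf; apply: eq_imagel => Y _.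
  by rewrite Heq.
have [X0 rX0] := Linf_rep LX.
by apply: inf_const; [exists X0 | move=> Y _; rewrite Hoo //= addeNy].
Qed.

Lemma sup_ninfty (U : Type) (B : set U) (h : U -> \bar R) :
  (forall x, B x -> h x = -oo%E) -> ereal_sup (h @` B) = -oo%E.
Proof.
move=> H; apply/eqP; rewrite -leeNy_eq; apply: ge_ereal_sup => _ [x Bx <-].
by rewrite H.
Qed.

Lemma sing_rhotilde X : Linf P X -> rhotilde alpha P X = -oo%E.
Proof. move=> LX; apply: sup_ninfty => Q _; exact: sing_inner_alpha. Qed.

Lemma sing_rhohat X : rhohat alpha P X = -oo%E.
Proof.
apply: sup_ninfty => Q QP; rewrite Hoo //= ?addeNy // => QQ; exact: notdom QQ QP.
Qed.

Lemma sing_lhs X : Linf P X ->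
  ereal_sup [set ereal_inf [set (expect Q (fun w => (- Xt w)%R) - alpha_t Q)%E
                            | Xt in reps P X] | Q in Qset] = -oo%E.
Proof. move=> LX; apply: sup_ninfty => Q QQ; exact: sing_inner. Qed.

End Sing.
End Main2.

Lemma bdd_Linf {d : measure_display} {T : measurableType d} {R : realType}
  (P : probability T R) (X : T -> R) : bdd_meas X -> Linf P X.
Proof.
move=> [mX [M hM]]; split => //; exists M; exists set0; split => //.
by move=> w /= h; apply: h; exact: hM.
Qed.

Lemma self_rep {d : measure_display} {T : measurableType d} {R : realType}
  (P : probability T R) (X : T -> R) : bdd_meas X -> reps P X X.
Proof.
move=> bX; split => //.
have -> : [set w | X w = X w] = setT by apply/seteqP; split.
exact: probability_setT.
Qed.


Unset Implicit Arguments.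
Set Strict Implicit.

Theorem proposition3p10 (d : measure_display) (T : measurableType d) (R : realType)
  (Pbar : probability T R) (Qset : set (probability T R))
  (alpha_t alpha : probability T R -> \bar R) :
  weak_closed Qset ->
  (forall Q, Qset Q -> Q `<< Pbar) ->
  (forall Q, Qset Q -> (alpha_t Q < +oo)%E) ->
  (-oo < ereal_inf (alpha_t @` Qset))%E ->
  (forall Q, Qset Q -> alpha Q = alpha_t Q) ->
  (forall Q, ~ Qset Q -> alpha Q = +oo%E) ->
  (forall X, bdd_meas X -> rho alpha X \is a fin_num) ->
  (forall P : probability T R, Pbar `<< P \/ singular Pbar P ->
     accP alpha P = acchat alpha P /\
     (forall X, Linf P X ->
        rhoP alpha P X = rhohat alpha P X /\
        rhohat alpha P X = rhotilde alpha P X /\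
        ereal_sup [set ereal_inf [set (expect Q (fun w => (- Xt w)%R) - alpha_t Q)%E
                                  | Xt in reps P X] | Q in Qset]
        = ereal_inf [set ereal_sup [set (expect Q (fun w => (- Xt w)%R) - alpha_t Q)%E
                                    | Q in Qset] | Xt in reps P X] /\
        ereal_inf [set ereal_sup [set (expect Q (fun w => (- Xt w)%R) - alpha_t Q)%E
                                  | Q in Qset] | Xt in reps P X]
        = rhoP alpha P X)) /\
  (forall P : probability T R, Pbar `<< P ->
     forall X, bdd_meas X -> rhoP alpha P X = rho alpha X) /\
  (forall P : probability T R, singular Pbar P ->
     forall X, Linf P X ->
       rhoP alpha P X = -oo%E /\ rhohat alpha P X = -oo%E /\
       rhotilde alpha P X = -oo%E) /\
  (forall (P : probability T R) X, bdd_meas X ->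
     (rhohat alpha P X <= rhoP alpha P X)%E /\
     (rhoP alpha P X <= rho alpha X)%E /\
     rho alpha X = rhoP alpha Pbar X /\
     rhoP alpha Pbar X = rhohat alpha Pbar X) /\
  (forall (P : probability T R) X, Linf P X -> Linf Pbar X ->
     (rhohat alpha P X <= rhoP alpha P X)%E /\
     (rhoP alpha P X <= rhoP alpha Pbar X)%E /\
     rhoP alpha Pbar X = rhohat alpha Pbar X).
Proof.
move=> _ Hdom Hfin Hinf Heq Hoo _.
have absP (P : probability T R) (X : T -> R) : Pbar `<< P -> Linf P X -> _ := fun HP LX => abs_all Hdom Heq Hoo HP LX.
have key (P : probability T R) : Pbar `<< P \/ singular Pbar P -> forall X, Linf P X ->
    rhoP alpha P X = rhohat alpha P X /\
        rhohat alpha P X = rhotilde alpha P X /\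
        ereal_sup [set ereal_inf [set (expect Q (fun w => (- Xt w)%R) - alpha_t Q)%E
                                  | Xt in reps P X] | Q in Qset]
        = ereal_inf [set ereal_sup [set (expect Q (fun w => (- Xt w)%R) - alpha_t Q)%E
                                    | Q in Qset] | Xt in reps P X] /\
        ereal_inf [set ereal_sup [set (expect Q (fun w => (- Xt w)%R) - alpha_t Q)%E
                                  | Q in Qset] | Xt in reps P X]
        = rhoP alpha P X.
  case=> [HP|[A [mA [PbA PcA]]]] X LX.
    have [h1 h2 h3 h4 h5] := absP P X HP LX.
    by rewrite h1 h2 h3 h4; move: h5; rewrite /SS => ->.
  rewrite (sing_rhoP Hdom Hinf Heq Hoo mA PbA PcA LX).
  rewrite (sing_rhohat Hdom Hoo mA PbA PcA X).
  rewrite (sing_rhotilde Hdom Hfin Hinf Heq Hoo mA PbA PcA LX).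
  rewrite (sing_lhs Hdom Hfin Hinf mA PbA PcA LX).
  by have := sing_mid Hdom Hinf mA PbA PcA LX; rewrite /SS => ->.
have part2 (P : probability T R) : Pbar `<< P -> forall X, bdd_meas X -> rhoP alpha P X = rho alpha X.
  move=> HP X bX; have [h1 _ _ _ _] := absP P X HP (bdd_Linf P bX).
  by rewrite h1 (rhoS Heq Hoo).
split.
  move=> P HP; split; last exact: key.
  apply/seteqP; split => X [LX h]; split => //.
    by rewrite -(key P HP X LX).1.
  by rewrite (key P HP X LX).1.
split; first exact: part2.
split.
  move=> P [A [mA [PbA PcA]]] X LX; split.
    exact: (sing_rhoP Hdom Hinf Heq Hoo mA PbA PcA LX).
  split; first exact: (sing_rhohat Hdom Hoo mA PbA PcA X).
  exact: (sing_rhotilde Hdom Hfin Hinf Heq Hoo mA PbA PcA LX).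
split.
  move=> P X bX; split; first exact: hat_le bX.1.
  split; first exact: le_rep (self_rep P bX).
  split; first by rewrite (part2 Pbar (@dom_refl _ _ _ Pbar) X bX).
  exact: (key Pbar (or_introl (@dom_refl _ _ _ Pbar)) X (bdd_Linf Pbar bX)).1.
move=> P X LX LXb; split; first exact: hat_le LX.1.
split; last exact: (key Pbar (or_introl (@dom_refl _ _ _ Pbar)) X LXb).1.
have [mX [M1 h1]] := LX; have [_ [M2 h2]] := LXb.
set M := Num.max M1 M2.
have sub (Pp : probability T R) Mi : Mi <= M ->
    Pp.-negligible (~` [set w | `|X w| <= Mi]) ->
    Pp.-negligible (~` [set w | `|X w| <= M]).
  move=> hM; apply: negligibleS => w /= hw h; apply: hw; exact: le_trans h hM.
have rP : reps P X (trunc X M) by apply: trunc_rep => //; apply: sub h1; rewrite le_max lexx.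
have rPb : reps Pbar X (trunc X M).
  by apply: trunc_rep => //; apply: sub h2; rewrite le_max lexx orbT.
apply: le_trans (le_rep alpha rP) _.
have [hb _ _ _ _] := absP Pbar X (@dom_refl _ _ _ Pbar) LXb.
by rewrite hb (rhoS Heq Hoo) (SS_rep alpha_t Hdom (@dom_refl _ _ _ Pbar) mX rPb).
Qed.
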